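(* Let $\psi_C(t)=\exp[-t\tanh t]$, $\psi_S(t)=\exp[1-t\coth t]$ and $\psi_T(t)=\exp[\frac{2t}{\sinh(2t)}-1]$ (the background driving characteristic functions of $1/\cosh t$, $t/\sinh t$ and $\tanh t/t$ respectively). Their free analogues have Voiculescu transforms, for $t>0$: (a) $V_{\tilde\psi_C}(it)=i\big[\tfrac{t^2}{2}\zeta(2,\tfrac t2)-\tfrac{t^2}{4}\zeta(2,\tfrac t4)+1\big]$; (b) $V_{\tilde\psi_S}(it)=i\big[1+t-\tfrac12t^2\zeta(2,\tfrac t2)\big]$; (c) $V_{\tilde\psi_T}(it)=it\big[t\zeta(2,\tfrac t2)-\tfrac t4\zeta(2,\tfrac t4)-1\big]=it\big[\tfrac t4\zeta(2,\tfrac{t+2}{4})-1\big]$.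
   Context: $\zeta(s,a):=\sum_{k=0}^\infty(k+a)^{-s}$ is the Hurwitz zeta function ($s>1$, $a>0$). For an infinitely divisible characteristic function $\phi$ with Khintchine exponent $\log\phi$ (the continuous logarithm with $\log\phi(0)=0$; here e.g. $\log\psi_C(t)=-t\tanh t$), its free analogue $\tilde\phi$ is the $\boxplus$-infinitely divisible probability measure whose Voiculescu transform satisfies $V_{\tilde\phi}(it)=it^2\int_0^\infty\overline{\log\phi(s)}e^{-ts}ds$ for $t>0$. *)

(* Defs.v *)
From Stdlib Require Import Reals ClassicalEpsilon.
Open Scope R_scope.

(* Complex numbers as pairs (real part, imaginary part). *)
Definition C : Type := (R * R)%type.

(* Hurwitz zeta: zeta(s,a) = sum_{k>=0} (k+a)^(-s)  (meaningful for s>1, a>0). *)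
Definition hurwitz_zeta (s a : R) : R :=
  epsilon (inhabits 0)
    (fun z => infinite_sum (fun k => Rpower (INR k + a) (- s)) z).

Definition improper_integral_0_inf (f : R -> R) (l : R) : Prop :=
  (forall b, 0 < b -> inhabited (Riemann_integrable f 0 b)) /\
  (forall eps, 0 < eps -> exists M, forall b (pr : Riemann_integrable f 0 b),
      0 < b -> M < b -> Rabs (RiemannInt pr - l) < eps).

(* [voiculescu_free_at L t v]: v is the value V_{~phi}(it) of the Voiculescu
   transform of the free analogue of phi, where L = log phi (Khintchine exponent,
   complex valued), i.e.  v = i t^2 \int_0^oo conj(L(s)) e^{-ts} ds.
   Writing L = a + i b, conj L = a - i b, so with
   A = \int a e^{-ts}, B = \int (-b) e^{-ts}:  v = i t^2 (A + i B) = (-t^2 B, t^2 A). *)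
Definition voiculescu_free_at (L : R -> C) (t : R) (v : C) : Prop :=
  exists A B,
    improper_integral_0_inf (fun s => fst (L s) * exp (- (t * s))) A /\
    improper_integral_0_inf (fun s => - snd (L s) * exp (- (t * s))) B /\
    v = (- (t ^ 2) * B, t ^ 2 * A).

Definition psi_C (t : R) : R := exp (- (t * tanh t)).
Definition psi_S (t : R) : R :=
  if Req_EM_T t 0 then 1 else exp (1 - t * (cosh t / sinh t)).
Definition psi_T (t : R) : R :=
  if Req_EM_T t 0 then 1 else exp (2 * t / sinh (2 * t) - 1).

(* Their Khintchine exponents (continuous logarithms with log phi(0) = 0);
   since psi_* are positive reals and the exponents are continuous (extended
   by continuity at 0), the continuous logarithm is the real exponent. *)
Definition log_psi_C (t : R) : C := (- (t * tanh t), 0).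
Definition log_psi_S (t : R) : C :=
  (if Req_EM_T t 0 then 0 else 1 - t * (cosh t / sinh t), 0).
Definition log_psi_T (t : R) : C :=
  (if Req_EM_T t 0 then 0 else 2 * t / sinh (2 * t) - 1, 0).

(* Main.v *)
Require Import Defs.
From Stdlib Require Import Reals ClassicalEpsilon Lra Psatz.
From Coquelicot Require Import Coquelicot.
Open Scope R_scope.

Definition P (f : R -> R) (l : R) : Prop :=
  (forall b, 0 < b -> ex_RInt f 0 b) /\
  (forall eps, 0 < eps -> exists M, forall b, 0 < b -> M < b -> Rabs (RInt f 0 b - l) < eps).

Lemma P_improper f l : P f l -> improper_integral_0_inf f l.
Proof.
  intros [H1 H2]; split.
  - intros b hb; constructor; apply ex_RInt_Reals_0; auto.
  - intros eps he; destruct (H2 eps he) as [M HM]; exists M; intros b pr hb hM.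
    rewrite <- RInt_Reals; auto.
Qed.

Lemma P_ext f g l : (forall s, f s = g s) -> P f l -> P g l.
Proof.
  intros E [H1 H2]; split.
  - intros b hb; apply ex_RInt_ext with f; auto.
  - intros eps he; destruct (H2 eps he) as [M HM]; exists M; intros b hb hM.
    rewrite <- (RInt_ext f); auto.
Qed.

Lemma P_plus f g l1 l2 : P f l1 -> P g l2 -> P (fun s => f s + g s) (l1 + l2).
Proof.
  intros [F1 F2] [G1 G2]; split.
  - intros b hb; apply (ex_RInt_plus f g); auto.
  - intros eps he.
    destruct (F2 (eps/2)) as [M1 HM1]; [lra|].
    destruct (G2 (eps/2)) as [M2 HM2]; [lra|].
    exists (Rmax M1 M2); intros b hb hM.
    assert (RInt (fun s => f s + g s) 0 b = RInt f 0 b + RInt g 0 b) as ->.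
    { apply (RInt_plus f g); auto. }
    specialize (HM1 b hb (Rle_lt_trans _ _ _ (Rmax_l _ _) hM)).
    specialize (HM2 b hb (Rle_lt_trans _ _ _ (Rmax_r _ _) hM)).
    revert HM1 HM2; unfold Rabs; repeat destruct Rcase_abs; lra.
Qed.

Lemma P_scal k f l : P f l -> P (fun s => k * f s) (k * l).
Proof.
  intros [F1 F2]; split.
  - intros b hb; apply (ex_RInt_scal f); auto.
  - intros eps he.
    destruct (F2 (eps / (Rabs k + 1))) as [M HM].
    { apply Rdiv_lt_0_compat; auto. pose proof (Rabs_pos k); lra. }
    exists M; intros b hb hM.
    assert (RInt (fun s => k * f s) 0 b = k * RInt f 0 b) as ->.
    { apply (RInt_scal f); auto. }
    replace (k * RInt f 0 b - k * l) with (k * (RInt f 0 b - l)) by ring.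
    rewrite Rabs_mult. specialize (HM b hb hM).
    pose proof (Rabs_pos k). pose proof (Rabs_pos (RInt f 0 b - l)).
    apply Rle_lt_trans with ((Rabs k + 1) * Rabs (RInt f 0 b - l)). nra.
    replace eps with ((Rabs k + 1) * (eps / (Rabs k + 1))) by (field; lra).
    apply Rmult_lt_compat_l; lra.
Qed.

Lemma P_unique f l1 l2 : P f l1 -> P f l2 -> l1 = l2.
Proof.
  intros [F1 F2] [G1 G2].
  destruct (Req_dec l1 l2) as [|Hn]; auto. exfalso.
  assert (he : 0 < Rabs (l1 - l2) / 2).
  { apply Rdiv_lt_0_compat; [apply Rabs_pos_lt; lra | lra]. }
  destruct (F2 _ he) as [M1 HM1]; destruct (G2 _ he) as [M2 HM2].
  set (b := Rmax 0 (Rmax M1 M2) + 1).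
  assert (0 < b) by (unfold b; pose proof (Rmax_l 0 (Rmax M1 M2)); lra).
  assert (M1 < b) by (unfold b; pose proof (Rmax_r 0 (Rmax M1 M2)); pose proof (Rmax_l M1 M2); lra).
  assert (M2 < b) by (unfold b; pose proof (Rmax_r 0 (Rmax M1 M2)); pose proof (Rmax_r M1 M2); lra).
  specialize (HM1 b H H0); specialize (HM2 b H H1).
  revert HM1 HM2; unfold Rabs; repeat destruct Rcase_abs; lra.
Qed.

Lemma P_zero : P (fun _ => 0) 0.
Proof.
  split.
  - intros; apply ex_RInt_const.
  - intros eps he; exists 0; intros b hb _.
    rewrite RInt_const. unfold scal; simpl; unfold mult; simpl.
    rewrite Rmult_0_r, Rminus_0_r, Rabs_R0; auto.
Qed.

Definition J (a b : R) := 1 / a ^ 2 - exp (- (a * b)) * (b / a + 1 / a ^ 2).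
Definition E (a b : R) := (1 - exp (- (a * b))) / a.

Lemma cont_sexp a x : continuous (fun s => s * exp (- (a * s))) x.
Proof. apply (ex_derive_continuous (K:=R_AbsRing) (V:=R_NormedModule)); auto_derive; auto. Qed.
Lemma cont_exp a x : continuous (fun s => exp (- (a * s))) x.
Proof. apply (ex_derive_continuous (K:=R_AbsRing) (V:=R_NormedModule)); auto_derive; auto. Qed.

Lemma isJ a b : 0 < a -> is_RInt (fun s => s * exp (- (a * s))) 0 b (J a b).
Proof.
  intros ha.
  assert (J a b = minus ((fun s => - exp (- (a * s)) * (s / a + 1 / a ^ 2)) b)
                        ((fun s => - exp (- (a * s)) * (s / a + 1 / a ^ 2)) 0)) as ->.
  { unfold J, minus, plus, opp; simpl. rewrite Rmult_0_r, Ropp_0, exp_0. field; lra. }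
  apply (@is_RInt_derive R_CompleteNormedModule (fun s => - exp (- (a * s)) * (s / a + 1 / a ^ 2)) (fun s => s * exp (- (a * s)))).
  - intros x _. auto_derive; auto. field; lra.
  - intros x _; apply cont_sexp.
Qed.

Lemma isE a b : 0 < a -> is_RInt (fun s => exp (- (a * s))) 0 b (E a b).
Proof.
  intros ha.
  assert (E a b = minus ((fun s => - exp (- (a * s)) / a) b)
                        ((fun s => - exp (- (a * s)) / a) 0)) as ->.
  { unfold E, minus, plus, opp; simpl. rewrite Rmult_0_r, Ropp_0, exp_0. field; lra. }
  apply (@is_RInt_derive R_CompleteNormedModule (fun s => - exp (- (a * s)) / a) (fun s => exp (- (a * s)))).
  - intros x _. auto_derive; auto. field; lra.
  - intros x _; apply cont_exp.
Qed.

Lemma decay1 a b : 0 < a -> 0 < b -> exp (- (a * b)) <= 1 / (a * b).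
Proof.
  intros ha hb. rewrite exp_Ropp.
  assert (0 < a * b) by nra.
  pose proof (exp_ineq1 (a*b) ltac:(lra)).
  unfold Rdiv; rewrite Rmult_1_l. apply Rinv_le_contravar; lra.
Qed.

Lemma decay2 a b : 0 < a -> 0 < b -> exp (- (a * b)) * b <= 4 / (a ^ 2 * b).
Proof.
  intros ha hb. rewrite exp_Ropp.
  assert (0 < a * b) by nra.
  pose proof (exp_ineq1 (a*b/2) ltac:(lra)).
  assert (exp (a * b) = exp (a*b/2) * exp (a*b/2)) by (rewrite <- exp_plus; f_equal; field).
  assert (exp (a*b) >= (a*b)^2/4) by nra.
  assert (0 < exp (a*b)) by apply exp_pos.
  apply Rmult_le_reg_l with (exp (a*b)); auto.
  rewrite <- Rmult_assoc, Rinv_r, Rmult_1_l by lra.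
  apply Rmult_le_reg_l with (a^2 * b). nra.
  replace (a ^ 2 * b * (exp (a * b) * (4 / (a ^ 2 * b)))) with (4 * exp (a*b)) by (field; lra).
  nra.
Qed.

Lemma J_le a b : 0 < a -> 0 <= b -> J a b <= 1 / a ^ 2.
Proof.
  intros ha hb. unfold J. pose proof (exp_pos (- (a*b))).
  assert (0 <= b / a + 1 / a ^ 2).
  { assert (0 <= b/a) by (apply Rdiv_le_0_compat; lra).
    assert (0 < 1/a^2) by (apply Rdiv_lt_0_compat; try lra; apply pow_lt; lra). lra. }
  nra.
Qed.

Lemma E_le a b : 0 < a -> 0 <= b -> E a b <= 1 / a.
Proof.
  intros ha hb. unfold E. pose proof (exp_pos (- (a*b))).
  unfold Rdiv. apply Rmult_le_compat_r. left; apply Rinv_0_lt_compat; lra. lra.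
Qed.

Definition delta c b := exp (- (c * b)) * (b / c + 1 / c ^ 2).

Lemma J_ge a c b : 0 < c -> c <= a -> 0 < b -> J a b >= 1 / a ^ 2 - delta c b.
Proof.
  intros hc hca hb. unfold J, delta.
  assert (exp (- (a*b)) <= exp (- (c * b))).
  { destruct (Req_dec a c) as [->|]; [lra|]. left; apply exp_increasing; nra. }
  assert (b / a <= b / c).
  { unfold Rdiv; apply Rmult_le_compat_l; [lra|]. apply Rinv_le_contravar; lra. }
  assert (1 / a^2 <= 1 / c^2).
  { unfold Rdiv; rewrite !Rmult_1_l; apply Rinv_le_contravar; [apply pow_lt; lra|]. nra. }
  assert (0 <= b/a) by (apply Rdiv_le_0_compat; lra).
  assert (0 < 1/a^2) by (apply Rdiv_lt_0_compat; try lra; apply pow_lt; lra).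
  pose proof (exp_pos (-(a*b))).
  assert (exp (- (a * b)) * (b / a + 1 / a ^ 2) <= exp (- (c * b)) * (b / c + 1 / c ^ 2)).
  { apply Rmult_le_compat; lra. }
  lra.
Qed.

Lemma delta_le c b : 0 < c -> 0 < b -> delta c b <= 5 / (c^3 * b).
Proof.
  intros hc hb. unfold delta. pose proof (decay1 c b hc hb). pose proof (decay2 c b hc hb).
  replace (exp (- (c * b)) * (b / c + 1 / c ^ 2)) with
    ((exp (- (c * b)) * b) / c + exp (- (c * b)) / c^2) by (field; lra).
  apply Rle_trans with ((4 / (c ^ 2 * b)) / c + (1 / (c * b)) / c^2).
  { apply Rplus_le_compat; unfold Rdiv; apply Rmult_le_compat_r; try (left; apply Rinv_0_lt_compat; try apply pow_lt; lra); lra. }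
  right; field; lra.
Qed.

Lemma P_sexp c : 0 < c -> P (fun s => s * exp (- (c * s))) (1 / c ^ 2).
Proof.
  intros hc; split.
  - intros b _; eexists; apply isJ; auto.
  - intros eps he. exists (5 / (c^3 * eps)). intros b hb hM.
    rewrite (is_RInt_unique _ _ _ _ (isJ c b hc)).
    pose proof (delta_le c b hc hb).
    assert (0 <= delta c b) by (unfold delta; pose proof (exp_pos (-(c*b)));
      assert (0 <= b/c) by (apply Rdiv_le_0_compat; lra);
      assert (0 < 1/c^2) by (apply Rdiv_lt_0_compat; try lra; apply pow_lt; lra); nra).
    assert (5 / (c^3 * b) < eps).
    { assert (0 < c^3) by (apply pow_lt; lra).
      apply Rmult_lt_reg_r with (c^3*b). nra.
      replace (5 / (c ^ 3 * b) * (c ^ 3 * b)) with 5 by (field; lra).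
      apply Rmult_lt_reg_r with (/ (c^3 * eps)). apply Rinv_0_lt_compat; nra.
      replace (eps * (c^3*b) * / (c^3*eps)) with b by (field; lra). lra. }
    unfold J; fold (delta c b). rewrite Rabs_left1; lra.
Qed.

Lemma P_exp c : 0 < c -> P (fun s => exp (- (c * s))) (1 / c).
Proof.
  intros hc; split.
  - intros b _; eexists; apply isE; auto.
  - intros eps he. exists (1 / (c^2 * eps)). intros b hb hM.
    rewrite (is_RInt_unique _ _ _ _ (isE c b hc)).
    pose proof (decay1 c b hc hb). pose proof (exp_pos (-(c*b))).
    assert (1 / (c*b) < c * eps).
    { apply Rmult_lt_reg_r with (c*b). nra.
      replace (1 / (c*b) * (c*b)) with 1 by (field; lra).
      apply Rmult_lt_reg_r with (/ (c^2 * eps)). apply Rinv_0_lt_compat; apply Rmult_lt_0_compat; [apply pow_lt|]; lra.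
      replace (c * eps * (c * b) * / (c ^ 2 * eps)) with b by (field; lra). lra. }
    unfold E. replace ((1 - exp (- (c * b))) / c - 1 / c) with (- (exp (-(c*b)) / c)) by (field; lra).
    rewrite Rabs_Ropp, Rabs_right.
    2:{ left; apply Rdiv_lt_0_compat; lra. }
    apply Rmult_lt_reg_r with c; auto. replace (exp (- (c * b)) / c * c) with (exp (-(c*b))) by (field; lra).
    lra.
Qed.

Definition phi (m s : R) : R := if Req_EM_T s 0 then m else (1 - exp (- (m * s))) / s.
Definition gfun (c m s : R) : R := exp (- (c * s)) / phi m s.

Lemma exp_ne1 x : x <> 0 -> exp x <> 1.
Proof. intros h e. apply h. rewrite <- exp_0 in e. apply exp_inv; auto. Qed.

Lemma phi_pos m s : 0 < m -> 0 < phi m s.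
Proof.
  intros hm; unfold phi; destruct Req_EM_T as [|hs]; auto.
  destruct (Rlt_or_le 0 s).
  - assert (exp (- (m*s)) < exp 0) by (apply exp_increasing; nra). rewrite exp_0 in H0.
    apply Rdiv_lt_0_compat; lra.
  - assert (s < 0) by lra.
    assert (exp 0 < exp (- (m*s))) by (apply exp_increasing; nra). rewrite exp_0 in H1.
    replace ((1 - exp (- (m * s))) / s) with ((exp (- (m * s)) - 1) / (- s)) by (field; lra).
    apply Rdiv_lt_0_compat; lra.
Qed.

Lemma phi_cont m s : 0 < m -> continuity_pt (phi m) s.
Proof.
  intros hm. destruct (Req_EM_T s 0) as [->|hs].
  - assert (D : derivable_pt_lim (fun x => 1 - exp (- (m * x))) 0 m).
    { apply is_derive_Reals. auto_derive; auto. rewrite Rmult_0_r, Ropp_0, exp_0. ring. }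
    intros eps he. destruct (D eps he) as [del Hd].
    exists del; split; [apply cond_pos|].
    intros x [_ Hx]. simpl in *. unfold R_dist in *.
    unfold phi at 2. destruct (Req_EM_T 0 0) as [_|]; [|lra].
    unfold phi. destruct (Req_EM_T x 0) as [->|hx].
    + rewrite Rminus_diag, Rabs_R0; auto.
    + specialize (Hd x hx). rewrite Rminus_0_r in Hx. specialize (Hd Hx).
      rewrite Rplus_0_l, Rmult_0_r, Ropp_0, exp_0 in Hd.
      replace ((1 - exp (- (m * x))) / x - m) with ((1 - exp (- (m * x)) - (1 - 1)) / x - m) by (field; auto).
      auto.
  - apply continuity_pt_filterlim.
    change (continuous (phi m) s).
    apply (continuous_ext_loc (phi m) (fun x => (1 - exp (- (m * x))) / x) s).
    + assert (hp : 0 < Rabs s) by (apply Rabs_pos_lt; auto).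
      exists (mkposreal _ hp). intros y Hy.
      unfold phi. destruct Req_EM_T as [->|]; auto.
      exfalso. unfold ball in Hy; simpl in Hy; unfold AbsRing_ball, abs, minus, plus, opp in Hy; simpl in Hy.
      rewrite Rplus_0_l, Rabs_Ropp in Hy. lra.
    + apply (ex_derive_continuous (K:=R_AbsRing) (V:=R_NormedModule)). auto_derive; auto.
Qed.

Lemma gfun_cont c m s : 0 < m -> continuous (gfun c m) s.
Proof.
  intros hm. apply continuity_pt_filterlim.
  assert (H : continuity_pt (div_fct (fun s => exp (- (c*s))) (phi m)) s); [|exact H].
  apply continuity_pt_div.
  - apply continuity_pt_filterlim. apply (cont_exp c).
  - apply phi_cont; auto.
  - pose proof (phi_pos m s hm); lra.
Qed.

Lemma gfun_0 c m : gfun c m 0 = 1 / m.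
Proof.
  unfold gfun, phi. destruct Req_EM_T; [|lra]. rewrite Rmult_0_r, Ropp_0, exp_0. auto.
Qed.

Lemma gfun_nz c m s : 0 < m -> s <> 0 -> gfun c m s = exp (- (c * s)) * s / (1 - exp (- (m * s))).
Proof.
  intros hm hs. unfold gfun, phi. destruct Req_EM_T; [lra|].
  assert (exp (- (m*s)) <> 1) by (apply exp_ne1; intro; apply hs; nra).
  field. split; auto. lra.
Qed.

Lemma gfun_base c m s : 0 < m -> gfun c m s = s * exp (- (c * s)) + exp (- (m * s)) * gfun c m s.
Proof.
  intros hm. destruct (Req_dec s 0) as [->|hs].
  - rewrite gfun_0, !Rmult_0_r, !Ropp_0, !exp_0. ring.
  - rewrite gfun_nz by auto.
    assert (exp (- (m*s)) <> 1) by (apply exp_ne1; intro; apply hs; nra).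
    field. lra.
Qed.

Lemma gfun_rem c m s n : 0 < m ->
  gfun c m s = sum_f_R0 (fun k => s * exp (- ((c + m * INR k) * s))) n
               + exp (- (m * INR (S n) * s)) * gfun c m s.
Proof.
  intros hm. induction n as [|n IH].
  - simpl. rewrite Rmult_0_r, Rplus_0_r, Rmult_1_r. apply gfun_base; auto.
  - assert (e1 : exp (- (m * INR (S n) * s)) * exp (- (c * s)) = exp (- ((c + m * INR (S n)) * s))).
    { rewrite <- exp_plus; f_equal; ring. }
    assert (e2 : exp (- (m * INR (S n) * s)) * exp (- (m * s)) = exp (- (m * INR (S (S n)) * s))).
    { rewrite <- exp_plus; f_equal. rewrite (S_INR (S n)). ring. }
    rewrite IH at 1. change (sum_f_R0 ?f (S n)) with (sum_f_R0 f n + f (S n)). cbv beta.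
    rewrite <- e1, <- e2. rewrite (gfun_base c m s hm) at 1. ring.
Qed.

Lemma gfun_bound c m s : 0 < c -> 0 < m -> 0 < s -> 0 <= gfun c m s <= 1 / m + s.
Proof.
  intros hc hm hs. split.
  - unfold gfun. left. apply Rdiv_lt_0_compat; [apply exp_pos|apply phi_pos; auto].
  - rewrite gfun_nz by lra.
    set (q := exp (- (m * s))). set (e := exp (- (c * s))).
    assert (He : 0 < e <= 1).
    { split. apply exp_pos. unfold e. rewrite <- exp_0. left; apply exp_increasing; nra. }
    assert (Hq : 0 < q /\ q * (1 + m * s) <= 1).
    { split. apply exp_pos. unfold q. rewrite exp_Ropp.
      pose proof (exp_ineq1 (m*s) ltac:(nra)). pose proof (exp_pos (m*s)).
      apply Rmult_le_reg_l with (exp (m*s)); auto.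
      rewrite <- Rmult_assoc, Rinv_r, Rmult_1_l; lra. }
    assert (0 < m*s) by nra. assert (0 < q*(m*s)) by (apply Rmult_lt_0_compat; lra). assert (0 < 1 - q) by nra.
    apply Rmult_le_reg_r with (m * (1 - q)). nra.
    replace (e * s / (1 - q) * (m * (1 - q))) with (e * s * m) by (field; lra).
    replace ((1 / m + s) * (m * (1 - q))) with ((1 + m * s) * (1 - q)) by (field; lra).
    nra.
Qed.

Lemma rp k a : 0 < a -> Rpower (INR k + a) (Ropp 2) = / (INR k + a) ^ 2.
Proof.
  intros ha. pose proof (pos_INR k).
  rewrite Rpower_Ropp. f_equal. replace 2 with (INR 2) at 1 by (simpl; ring).
  apply Rpower_pow. lra.
Qed.

Lemma w_bound a n : 0 < a ->
  sum_f_R0 (fun k => / (INR k + a) ^ 2) n <= / a ^ 2 + 2 - 2 / (INR n + 1).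
Proof.
  intros ha. induction n as [|n IH].
  - simpl. replace (0 + a) with a by ring. replace (2 / (0+1)) with 2 by field. lra.
  - change (sum_f_R0 ?f (S n)) with (sum_f_R0 f n + f (S n)); cbv beta.
    rewrite !S_INR. pose proof (pos_INR n).
    set (x := INR n) in *.
    assert (/ (x + 1 + a) ^ 2 <= 2 / (x + 1) - 2 / (x + 1 + 1)).
    { replace (2 / (x + 1) - 2 / (x + 1 + 1)) with (/ ((x+1)*(x+2)/2)) by (field; lra).
      apply Rinv_le_contravar. apply Rdiv_lt_0_compat; nra. nra. }
    lra.
Qed.

Lemma zeta_cv a : 0 < a ->
  Un_cv (sum_f_R0 (fun k => / (INR k + a) ^ 2)) (hurwitz_zeta 2 a).
Proof.
  intros ha.
  assert (pos : forall k, 0 < / (INR k + a) ^ 2).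
  { intro k; pose proof (pos_INR k); apply Rinv_0_lt_compat; apply pow_lt; lra. }
  assert (gr : Un_growing (sum_f_R0 (fun k => / (INR k + a) ^ 2))).
  { intro n; change (sum_f_R0 ?f (S n)) with (sum_f_R0 f n + f (S n)); specialize (pos (S n)); lra. }
  assert (ub : has_ub (sum_f_R0 (fun k => / (INR k + a) ^ 2))).
  { exists (/ a ^ 2 + 2). intros x [n ->]. pose proof (w_bound a n ha).
    pose proof (pos_INR n). assert (0 < 2 / (INR n + 1)) by (apply Rdiv_lt_0_compat; lra). lra. }
  destruct (growing_cv _ gr ub) as [z Hz].
  assert (Hs : infinite_sum (fun k => Rpower (INR k + a) (Ropp 2)) z).
  { intros eps he. destruct (Hz eps he) as [N HN]. exists N. intros n hn.
    rewrite (sum_eq _ (fun k => / (INR k + a) ^ 2)); auto.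
    intros i _; apply rp; auto. }
  assert (hurwitz_zeta 2 a = z) as ->; auto.
  unfold hurwitz_zeta.
  pose proof (epsilon_spec (inhabits 0) (fun z => infinite_sum (fun k => Rpower (INR k + a) (Ropp 2)) z) (ex_intro _ z Hs)) as He.
  simpl in He.
  apply (UL_sequence (sum_f_R0 (fun k => Rpower (INR k + a) (Ropp 2)))); auto.
Qed.

Lemma sum_ge (x y : nat -> R) d n : (forall k, x k >= y k - d) ->
  sum_f_R0 x n >= sum_f_R0 y n - (INR n + 1) * d.
Proof.
  intros H. induction n as [|n IH].
  - simpl. specialize (H 0%nat). lra.
  - change (sum_f_R0 ?f (S n)) with (sum_f_R0 f n + f (S n)).
    rewrite S_INR. specialize (H (S n)). lra.
Qed.

Lemma isSum c m b n : 0 < c -> 0 < m ->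
  is_RInt (fun s => sum_f_R0 (fun k => s * exp (- ((c + m * INR k) * s))) n) 0 b
          (sum_f_R0 (fun k => J (c + m * INR k) b) n).
Proof.
  intros hc hm.
  assert (pk : forall k, 0 < c + m * INR k).
  { intro k; pose proof (pos_INR k); nra. }
  induction n as [|n IH].
  - exact (isJ _ b (pk 0%nat)).
  - exact (is_RInt_plus _ _ 0 b _ _ IH (isJ _ b (pk (S n)))).
Qed.

Lemma S_cv c m : 0 < c -> 0 < m ->
  Un_cv (sum_f_R0 (fun k => 1 / (c + m * INR k) ^ 2)) (hurwitz_zeta 2 (c / m) / m ^ 2).
Proof.
  intros hc hm. pose proof (zeta_cv (c/m) ltac:(apply Rdiv_lt_0_compat; lra)) as H.
  assert (hm2 : 0 < m^2) by (apply pow_lt; lra).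
  intros eps he. destruct (H (eps * m^2)) as [N HN].
  { apply Rmult_lt_0_compat; lra. }
  exists N; intros n hn. specialize (HN n hn). unfold R_dist in *.
  assert (sum_f_R0 (fun k => 1 / (c + m * INR k) ^ 2) n =
          / m^2 * sum_f_R0 (fun k => / (INR k + c / m) ^ 2) n) as ->.
  { rewrite scal_sum. apply sum_eq. intros i _. pose proof (pos_INR i).
    assert (0 < c + m * INR i) by nra.
    assert (INR i + c / m = (c + m * INR i) / m) as -> by (field; lra).
    field. lra. }
  replace (/ m ^ 2 * sum_f_R0 (fun k => / (INR k + c / m) ^ 2) n - hurwitz_zeta 2 (c / m) / m ^ 2)
    with (/ m^2 * (sum_f_R0 (fun k => / (INR k + c / m) ^ 2) n - hurwitz_zeta 2 (c / m))) by (field; lra).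
  rewrite Rabs_mult, Rabs_right by (left; apply Rinv_0_lt_compat; lra).
  apply Rmult_lt_reg_l with (m^2); auto. rewrite <- Rmult_assoc, Rinv_r, Rmult_1_l by lra. lra.
Qed.

Lemma L1 c m : 0 < c -> 0 < m -> P (gfun c m) (hurwitz_zeta 2 (c / m) / m ^ 2).
Proof.
  intros hc hm.
  set (Z := hurwitz_zeta 2 (c / m) / m ^ 2).
  set (Sn := sum_f_R0 (fun k => 1 / (c + m * INR k) ^ 2)).
  assert (pk : forall k, 0 < c + m * INR k) by (intro k; pose proof (pos_INR k); nra).
  assert (HS : Un_cv Sn Z) by (apply S_cv; auto).
  assert (Hg : Un_growing Sn).
  { intro n; unfold Sn; change (sum_f_R0 ?f (S n)) with (sum_f_R0 f n + f (S n)).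
    assert (0 < 1 / (c + m * INR (S n)) ^ 2) by (apply Rdiv_lt_0_compat; [lra|apply pow_lt; auto]). lra. }
  assert (SZ : forall n, Sn n <= Z) by (apply growing_ineq; auto).
  assert (exI : forall b, ex_RInt (gfun c m) 0 b).
  { intro b; apply (ex_RInt_continuous (V:=R_CompleteNormedModule)); intros; apply gfun_cont; auto. }
  assert (Bnd : forall b n, 0 < b ->
     Sn n - (INR n + 1) * delta c b <= RInt (gfun c m) 0 b <= Sn n + 2 / (m^2 * (INR n + 1))).
  { intros b n hb.
    set (I := RInt (gfun c m) 0 b).
    assert (HI : is_RInt (gfun c m) 0 b I) by (apply (RInt_correct (V:=R_CompleteNormedModule)); auto).
    set (Mn := m * INR (Datatypes.S n)).
    assert (hMn : 0 < Mn) by (unfold Mn; rewrite S_INR; pose proof (pos_INR n); nra).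
    set (SJ := sum_f_R0 (fun k => J (c + m * INR k) b) n).
    assert (Hr : is_RInt (fun s => exp (- (Mn * s)) * gfun c m s) 0 b (I - SJ)).
    { apply (is_RInt_ext (fun y => minus (gfun c m y)
         (sum_f_R0 (fun k => y * exp (- ((c + m * INR k) * y))) n))).
      - intros x _. unfold minus, plus, opp; simpl. rewrite (gfun_rem c m x n hm) at 1. unfold Mn. ring.
      - apply (is_RInt_minus (V:=R_NormedModule)); auto. apply isSum; auto. }
    assert (Hr0 : 0 <= I - SJ).
    { apply (is_RInt_le (fun _ => 0) (fun s => exp (- (Mn * s)) * gfun c m s) 0 b 0); auto; try lra.
      - replace 0 with (scal (b - 0) 0) at 2 by (unfold scal; simpl; unfold mult; simpl; ring).
        apply (is_RInt_const (V:=R_NormedModule)).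
      - intros x hx. pose proof (gfun_bound c m x hc hm (proj1 hx)). pose proof (exp_pos (- (Mn * x))). nra. }
    assert (Hr1 : I - SJ <= 1 / m * E Mn b + J Mn b).
    { apply (is_RInt_le (fun s => exp (- (Mn * s)) * gfun c m s)
               (fun s => 1 / m * exp (- (Mn * s)) + s * exp (- (Mn * s))) 0 b); auto; try lra.
      - apply (is_RInt_plus (V:=R_NormedModule) (fun s => 1 / m * exp (- (Mn * s)))
                 (fun s => s * exp (- (Mn * s)))).
        + apply (is_RInt_scal (V:=R_NormedModule) (fun s => exp (- (Mn * s)))). apply isE; auto.
        + apply isJ; auto.
      - intros x hx. pose proof (gfun_bound c m x hc hm (proj1 hx)). pose proof (exp_pos (- (Mn * x))).
        nra. }
    assert (HE : 1 / m * E Mn b + J Mn b <= 2 / (m^2 * (INR n + 1))).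
    { pose proof (E_le Mn b hMn ltac:(lra)). pose proof (J_le Mn b hMn ltac:(lra)).
      pose proof (pos_INR n).
      assert (1 / m * E Mn b <= 1 / m * (1 / Mn)).
      { apply Rmult_le_compat_l; auto. left; apply Rdiv_lt_0_compat; lra. }
      assert (Mn = m * (INR n + 1)) by (unfold Mn; rewrite S_INR; auto).
      assert (1 / m * (1 / Mn) = 1 / (m^2 * (INR n + 1))) by (rewrite H3; field; lra).
      assert (1 / Mn ^ 2 <= 1 / (m^2 * (INR n + 1))).
      { rewrite H3. unfold Rdiv; rewrite !Rmult_1_l. apply Rinv_le_contravar.
        apply Rmult_lt_0_compat; [apply pow_lt|]; lra.
        assert (0 < m^2) by (apply pow_lt; lra). nra. }
      replace (2 / (m^2 * (INR n + 1))) with (1 / (m^2 * (INR n + 1)) + 1 / (m^2 * (INR n + 1))) by (field; lra).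
      lra. }
    assert (HJ : SJ >= Sn n - (INR n + 1) * delta c b).
    { apply sum_ge. intro k. apply J_ge; auto. pose proof (pos_INR k); nra. }
    assert (SJ <= Sn n) by (apply sum_Rle; intros; apply J_le; auto; lra).
    fold I. split; lra. }
  split.
  - intros b _; auto.
  - intros eps he.
    destruct (HS (eps / 2)) as [N HN]; [lra|].
    specialize (HN N (le_n N)). unfold R_dist in HN.
    exists (10 * (INR N + 1) / (c^3 * eps)). intros b hb hM.
    assert (Up : RInt (gfun c m) 0 b <= Z).
    { destruct (Rle_or_lt (RInt (gfun c m) 0 b) Z) as [|hlt]; auto. exfalso.
      destruct (INR_unbounded (2 / (m^2 * (RInt (gfun c m) 0 b - Z)))) as [n hn].
      destruct (Bnd b n hb) as [_ H2]. pose proof (SZ n). pose proof (pos_INR n).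
      assert (0 < m^2) by (apply pow_lt; lra).
      assert (2 / (m ^ 2 * (INR n + 1)) < RInt (gfun c m) 0 b - Z).
      { apply Rmult_lt_reg_r with (m^2 * (INR n + 1)). nra.
        replace (2 / (m ^ 2 * (INR n + 1)) * (m ^ 2 * (INR n + 1))) with 2 by (field; lra).
        set (D := RInt (gfun c m) 0 b - Z) in *. set (K := 2 / (m ^ 2 * D)) in *.
        assert (0 < D) by (unfold D; lra).
        assert (2 = m^2 * D * K) by (unfold K; field; lra).
        assert (0 < m^2 * D) by nra. nra. }
      lra. }
    destruct (Bnd b N hb) as [H1 _].
    assert (Hd : (INR N + 1) * delta c b < eps / 2).
    { pose proof (delta_le c b hc hb). pose proof (pos_INR N).
      assert (0 < c^3) by (apply pow_lt; lra).
      apply Rle_lt_trans with ((INR N + 1) * (5 / (c^3 * b))). apply Rmult_le_compat_l; lra.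
      apply Rmult_lt_reg_r with (c^3 * b * 2 / eps). apply Rdiv_lt_0_compat; nra.
      replace ((INR N + 1) * (5 / (c ^ 3 * b)) * (c ^ 3 * b * 2 / eps)) with (10 * (INR N + 1) / eps) by (field; lra).
      replace (eps / 2 * (c ^ 3 * b * 2 / eps)) with (c^3 * b) by (field; lra).
      apply Rmult_lt_reg_r with (/ c^3). apply Rinv_0_lt_compat; lra.
      replace (c ^ 3 * b * / c ^ 3) with b by (field; lra).
      replace (10 * (INR N + 1) / eps * / c ^ 3) with (10 * (INR N + 1) / (c ^ 3 * eps)) by (field; lra). lra. }
    pose proof (SZ N).
    unfold Rabs; destruct Rcase_abs; revert HN; unfold Rabs; destruct Rcase_abs; intros; lra.
Qed.

Lemma exp_add_neg a b s : exp (- ((a + b) * s)) = exp (- (a * s)) * exp (- (b * s)).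
Proof. rewrite <- exp_plus; f_equal; ring. Qed.
Lemma exp_m2 s : exp (- (2 * s)) = / exp s ^ 2.
Proof. rewrite exp_Ropp; f_equal. replace (2*s) with (s+s) by ring. rewrite exp_plus; ring. Qed.
Lemma exp_m4 s : exp (- (4 * s)) = / exp s ^ 4.
Proof. rewrite exp_Ropp; f_equal. replace (4*s) with (s+s+s+s) by ring. rewrite !exp_plus; ring. Qed.

Lemma y_facts s : s <> 0 -> 0 < exp s /\ exp s <> 1 /\ exp s ^ 2 <> 1 /\ exp s ^ 4 <> 1.
Proof.
  intros hs. pose proof (exp_pos s). pose proof (exp_ne1 s hs).
  set (y := exp s) in *.
  assert (y < 1 \/ 1 < y) as [h|h] by lra.
  - assert (y^2 < 1) by nra. assert (y^4 < 1) by nra. repeat split; lra.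
  - assert (y^2 > 1) by nra. assert (y^4 > 1) by nra. repeat split; lra.
Qed.

Lemma g_split t s : gfun t 2 s = gfun t 4 s + gfun (t + 2) 4 s.
Proof.
  destruct (Req_dec s 0) as [->|hs].
  - rewrite !gfun_0. field.
  - rewrite !gfun_nz by (auto; lra).
    rewrite exp_add_neg, exp_m2, exp_m4.
    destruct (y_facts s hs) as (h0 & h1 & h2 & h4).
    set (y := exp s) in *. set (e := exp (- (t * s))).
    assert (1 - / y ^ 2 <> 0).
    { intro h. apply h2. assert (/ y^2 = 1) by lra. rewrite <- (Rinv_inv (y^2)), H. apply Rinv_1. }
    assert (1 - / y ^ 4 <> 0).
    { intro h. apply h4. assert (/ y^4 = 1) by lra. rewrite <- (Rinv_inv (y^4)), H0. apply Rinv_1. }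
    field. repeat split; auto; try lra.
Qed.

Ltac ysetup s hs :=
  destruct (y_facts s hs) as (h0 & h1 & h2 & h4);
  let y := fresh "y" in set (y := exp s) in *;
  assert (1 - / y ^ 2 <> 0) by
    (let h := fresh in let hh := fresh in intro h; apply h2; assert (hh : / y^2 = 1) by lra; rewrite <- (Rinv_inv (y^2)); rewrite hh; apply Rinv_1);
  assert (1 - / y ^ 4 <> 0) by
    (let h := fresh in let hh := fresh in intro h; apply h4; assert (hh : / y^4 = 1) by lra; rewrite <- (Rinv_inv (y^4)); rewrite hh; apply Rinv_1).

Lemma g_shift c m s : 0 < m -> gfun c m s - gfun (c + m) m s = s * exp (- (c * s)).
Proof.
  intros hm. destruct (Req_dec s 0) as [->|hs].
  - rewrite !gfun_0. ring.
  - rewrite !gfun_nz by auto. rewrite exp_add_neg.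
    assert (exp (- (m*s)) <> 1) by (apply exp_ne1; intro; apply hs; nra).
    field. lra.
Qed.

Lemma idA t s : - (s * tanh s) * exp (- (t * s)) =
  - gfun t 4 s + 2 * gfun (t + 2) 4 s - gfun (t + 4) 4 s.
Proof.
  destruct (Req_dec s 0) as [->|hs].
  - rewrite !gfun_0. field.
  - rewrite !gfun_nz by (auto; lra).
    rewrite !exp_add_neg, exp_m4.
    replace (exp (- (2 * s))) with (/ exp s ^ 2) by (symmetry; apply exp_m2).
    replace (exp (- (4 * s))) with (/ exp s ^ 4) by (symmetry; apply exp_m4).
    unfold tanh, sinh, cosh. rewrite exp_Ropp.
    ysetup s hs.
    assert (y + / y <> 0) by (assert (0 < / y) by (apply Rinv_0_lt_compat; lra); lra).
    field. repeat split; auto; try lra. all: nra.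
Qed.

Lemma exp_2 s : exp (2 * s) = exp s ^ 2.
Proof. replace (2*s) with (s+s) by ring. rewrite exp_plus; ring. Qed.

Lemma idB t s : (if Req_EM_T s 0 then 0 else 1 - s * (cosh s / sinh s)) * exp (- (t * s)) =
  exp (- (t * s)) - gfun t 2 s - gfun (t + 2) 2 s.
Proof.
  destruct (Req_EM_T s 0) as [->|hs].
  - rewrite !gfun_0, Rmult_0_r, Ropp_0, exp_0. field.
  - rewrite !gfun_nz by (auto; lra).
    rewrite !exp_add_neg.
    replace (exp (- (2 * s))) with (/ exp s ^ 2) by (symmetry; apply exp_m2).
    unfold sinh, cosh. rewrite exp_Ropp.
    ysetup s hs.
    assert (y - / y <> 0).
    { intro h. apply h1. assert (hq : y*y - 1 = y*(y - / y)) by (field; lra).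
      rewrite h, Rmult_0_r in hq. nra. }
    field. repeat split; auto; try lra. all: nra.
Qed.

Lemma idC t s : (if Req_EM_T s 0 then 0 else 2 * s / sinh (2 * s) - 1) * exp (- (t * s)) =
  4 * gfun (t + 2) 4 s - exp (- (t * s)).
Proof.
  destruct (Req_EM_T s 0) as [->|hs].
  - rewrite !gfun_0, Rmult_0_r, Ropp_0, exp_0. field.
  - rewrite !gfun_nz by (auto; lra).
    rewrite !exp_add_neg.
    replace (exp (- (2 * s))) with (/ exp s ^ 2) by (symmetry; apply exp_m2).
    replace (exp (- (4 * s))) with (/ exp s ^ 4) by (symmetry; apply exp_m4).
    unfold sinh. rewrite exp_2, exp_m2.
    ysetup s hs.
    assert (y^2 - / y^2 <> 0).
    { intro h. apply h2. assert (hq : y^2*y^2 - 1 = y^2*(y^2 - / y^2)) by (field; lra).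
      rewrite h, Rmult_0_r in hq. assert (0 < y^2) by nra. nra. }
    field. repeat split; auto; try lra. all: nra.
Qed.

Notation h a := (hurwitz_zeta 2 a).

Lemma R1 t : 0 < t -> h (t / 2) / 2 ^ 2 = h (t / 4) / 4 ^ 2 + h ((t + 2) / 4) / 4 ^ 2.
Proof.
  intros ht. apply (P_unique (gfun t 2)). apply L1; lra.
  apply (P_ext (fun s => gfun t 4 s + gfun (t + 2) 4 s)).
  intro s; symmetry; apply g_split.
  apply P_plus; apply L1; lra.
Qed.

Lemma R2 c m : 0 < c -> 0 < m -> h (c / m) / m ^ 2 - h ((c + m) / m) / m ^ 2 = 1 / c ^ 2.
Proof.
  intros hc hm. apply (P_unique (fun s => s * exp (- (c * s)))).
  - apply (P_ext (fun s => gfun c m s + -1 * gfun (c + m) m s)).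
    + intro s. rewrite <- (g_shift c m s hm). ring.
    + replace (h (c / m) / m ^ 2 - h ((c + m) / m) / m ^ 2) with
        (h (c / m) / m ^ 2 + -1 * (h ((c + m) / m) / m ^ 2)) by ring.
      apply P_plus; [|apply P_scal]; apply L1; lra.
  - apply P_sexp; auto.
Qed.

Lemma PB (L : R -> C) t : (forall s, snd (L s) = 0) ->
  improper_integral_0_inf (fun s => - snd (L s) * exp (- (t * s))) 0.
Proof.
  intros H. apply P_improper. apply (P_ext (fun _ => 0)); [|apply P_zero].
  intro s; rewrite H; ring.
Qed.

Theorem corollary5 (t : R) (ht : 0 < t) :
  voiculescu_free_at log_psi_C t
    (0, t ^ 2 / 2 * hurwitz_zeta 2 (t / 2) - t ^ 2 / 4 * hurwitz_zeta 2 (t / 4) + 1)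
  /\
  voiculescu_free_at log_psi_S t
    (0, 1 + t - / 2 * t ^ 2 * hurwitz_zeta 2 (t / 2))
  /\
  voiculescu_free_at log_psi_T t
    (0, t * (t * hurwitz_zeta 2 (t / 2) - t / 4 * hurwitz_zeta 2 (t / 4) - 1))
  /\
  voiculescu_free_at log_psi_T t
    (0, t * (t / 4 * hurwitz_zeta 2 ((t + 2) / 4) - 1)).
Proof.
  pose proof (R1 t ht) as r1.
  pose proof (R2 t 4 ht ltac:(lra)) as r2.
  pose proof (R2 t 2 ht ltac:(lra)) as r3.
  assert (tn : t <> 0) by lra.
  replace (2^2) with 4 in r1, r3 by ring. replace (4^2) with 16 in r1, r2 by ring.
  assert (e1 : h (t / 2) = (h (t / 4) + h ((t + 2) / 4)) / 4) by lra.
  assert (e2 : h ((t + 4) / 4) = h (t / 4) - 16 * (1 / t ^ 2)) by lra.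
  assert (e3 : h ((t + 2) / 2) = h (t / 2) - 4 * (1 / t ^ 2)) by lra.
  assert (PT : P (fun s => fst (log_psi_T s) * exp (- (t * s)))
                (4 * (h ((t + 2) / 4) / 4 ^ 2) + -1 * (1 / t))).
  { apply (P_ext (fun s => 4 * gfun (t + 2) 4 s + -1 * exp (- (t * s)))).
    - intro s. unfold log_psi_T; simpl fst. rewrite idC. ring.
    - apply P_plus; apply P_scal; [apply L1|apply P_exp]; lra. }
  unfold voiculescu_free_at. split; [|split; [|split]].
  - exists (-1 * (h (t / 4) / 4 ^ 2) + (2 * (h ((t + 2) / 4) / 4 ^ 2) + -1 * (h ((t + 4) / 4) / 4 ^ 2))), 0.
    split; [|split; [apply PB; reflexivity|]].
    + apply P_improper.
      apply (P_ext (fun s => -1 * gfun t 4 s + (2 * gfun (t + 2) 4 s + -1 * gfun (t + 4) 4 s))).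
      * intro s. unfold log_psi_C; simpl fst. rewrite idA. ring.
      * apply P_plus; [|apply P_plus]; apply P_scal; apply L1; lra.
    + f_equal; [ring|]. rewrite e1, e2. field. auto.
  - exists (1 / t + (-1 * (h (t / 2) / 2 ^ 2) + -1 * (h ((t + 2) / 2) / 2 ^ 2))), 0.
    split; [|split; [apply PB; reflexivity|]].
    + apply P_improper.
      apply (P_ext (fun s => exp (- (t * s)) + (-1 * gfun t 2 s + -1 * gfun (t + 2) 2 s))).
      * intro s. unfold log_psi_S; simpl fst. rewrite idB. ring.
      * apply P_plus; [apply P_exp; lra|apply P_plus]; apply P_scal; apply L1; lra.
    + f_equal; [ring|]. rewrite e3. field. auto.
  - exists (4 * (h ((t + 2) / 4) / 4 ^ 2) + -1 * (1 / t)), 0.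
    split; [apply P_improper, PT|split; [apply PB; reflexivity|]].
    f_equal; [ring|]. rewrite e1. field. auto.
  - exists (4 * (h ((t + 2) / 4) / 4 ^ 2) + -1 * (1 / t)), 0.
    split; [apply P_improper, PT|split; [apply PB; reflexivity|]].
    f_equal; [ring|]. field. auto.
Qed.
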